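(* Assume the stationary generator setting described in the context (for a process $(X_t)$ with memory $(R_t)$), and let $k\ge1$. Then $$H(R_k,X_{1:k})-H(R_0,X_{1:k})=I(R_0;X_{1:k})-I(R_k;X_{1:k})=\zeta_R(k)-I\big(\overleftarrow X;R_0\,\big|\,\overrightarrow X,R_k\big).$$
   Context: Stationary generator setting: $\mathcal X$ and $\mathcal R$ finite sets; $(X_t,R_t)_{t\in\mathbb Z}$ jointly stationary with $X_t\in\mathcal X$, $R_t\in\mathcal R$ (memory after $X_t$). Generator condition: for every $t$, $\big((X_s)_{s\le t},(R_s)_{s<t}\big)$ is conditionally independent of $\big((X_s)_{s>t},(R_s)_{s>t}\big)$ given $R_t$. Notation: $X_{a:b}=(X_a,\dots,X_b)$, $\overleftarrow X=(\dots,X_{-1},X_0)$, $\overrightarrow X=(X_1,X_2,\dots)$; information quantities with infinite sequences are limits of finite windows. Oracular information: $\zeta_R(k):=I(X_{1:k};R_0\mid\overleftarrow X)$. *)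

(* Defs.v *)
From mathcomp Require Import all_boot.
From Stdlib Require Import Reals.

Local Open Scope R_scope.

(* A jointly stationary process ((X_t,R_t))_{t in Z} with values in finite   *)
(* sets Xs, Rs is described by its (shift-invariant) finite-dimensional law:  *)
(* law n w = Pr[(X_{a+i},R_{a+i})_{i<n} = w] for any a (independent of a).    *)

Definition window (Xs Rs : finType) (n : nat) := {ffun 'I_n -> Xs * Rs}.

Definition wtail {Xs Rs : finType} (n : nat) (w : window Xs Rs n.+1) : window Xs Rs n :=
  [ffun i => w (lift ord0 i)].
Definition winit {Xs Rs : finType} (n : nat) (w : window Xs Rs n.+1) : window Xs Rs n :=
  [ffun i => w (widen_ord (leqnSn n) i)].

Definition stationary_law {Xs Rs : finType}
    (law : forall n, window Xs Rs n -> R) : Prop :=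
  (forall n w, 0 <= law n w) /\
  (forall w, law 0%nat w = 1) /\
  (forall n (w : window Xs Rs n),
      law n w = \big[Rplus/0]_(w' : window Xs Rs n.+1 | winit n w' == w) law n.+1 w') /\
  (forall n (w : window Xs Rs n),
      law n w = \big[Rplus/0]_(w' : window Xs Rs n.+1 | wtail n w' == w) law n.+1 w').

Definition proj {Xs Rs : finType} L (sx sr : seq nat) (w : window Xs Rs L.+1)
  : seq Xs * seq Rs :=
  ([seq (w (inord i)).1 | i <- sx], [seq (w (inord i)).2 | i <- sr]).

Definition prob {Xs Rs : finType} (law : forall n, window Xs Rs n -> R) L
    (sx sr : seq nat) (w : window Xs Rs L.+1) : R :=
  \big[Rplus/0]_(w' : window Xs Rs L.+1 | proj L sx sr w' == proj L sx sr w) law L.+1 w'.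

Definition ent {Xs Rs : finType} (law : forall n, window Xs Rs n -> R) L
    (sx sr : seq nat) : R :=
  - \big[Rplus/0]_(w : window Xs Rs L.+1) (law L.+1 w * ln (prob law L sx sr w)).

(* A variable = (positions of X's, positions of R's) in the window. *)
Definition var := (seq nat * seq nat)%type.
Definition vjoin (a b : var) : var := (a.1 ++ b.1, a.2 ++ b.2).

Definition H {Xs Rs : finType} (law : forall n, window Xs Rs n -> R) L (a : var) : R := ent law L a.1 a.2.

Definition MI {Xs Rs : finType} (law : forall n, window Xs Rs n -> R) L (a b : var) : R :=
  H law L a + H law L b - H law L (vjoin a b).
Definition CMI {Xs Rs : finType} (law : forall n, window Xs Rs n -> R) L (a b c : var) : R :=
  H law L (vjoin a c) + H law L (vjoin b c)
  - H law L (vjoin (vjoin a b) c) - H law L c.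

(* Generator condition: in every finite window (positions 0..L) and every    *)
(* t <= L, ((X_s)_{s<=t},(R_s)_{s<t}) is conditionally independent of       *)
(* ((X_s)_{s>t},(R_s)_{s>t}) given R_t.  (By stationarity and finite-        *)
(* dimensionality this is the generator condition of the paper.)             *)
Definition generator_cond {Xs Rs : finType} (law : forall n, window Xs Rs n -> R) : Prop :=
  forall L t (w : window Xs Rs L.+1), (t <= L)%nat ->
    let past := (iota 0 t.+1, iota 0 t) in
    let rt := ([::], [:: t]) in
    let fut := (iota t.+1 (L - t), iota t.+1 (L - t)) in
    prob law L (vjoin (vjoin past rt) fut).1 (vjoin (vjoin past rt) fut).2 w
      * prob law L rt.1 rt.2 w
    = prob law L (vjoin past rt).1 (vjoin past rt).2 w
      * prob law L (vjoin rt fut).1 (vjoin rt fut).2 w.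

Definition dlim (u : nat -> nat -> R) (l : R) : Prop :=
  forall eps, eps > 0 -> exists N, forall m n, (N <= m)%nat -> (N <= n)%nat ->
    Rabs (u m n - l) < eps.

Definition X1k (k : nat) : var := (iota 1 k, [::]).

(* zeta_R(k) approximant with past X_{-m:0}: window times -m..k, L = m+k,  *)
(* time t sits at position t+m.                                            *)
Definition zeta_approx {Xs Rs : finType} (law : forall n, window Xs Rs n -> R) (k m : nat) : R :=
  CMI law (m + k) (iota m.+1 k, [::]) ([::], [:: m]) (iota 0 m.+1, [::]).

(* approximant of I(past X ; R_0 | future X, R_k) with past X_{-m:0} and    *)
(* future X_{1:n+k}: window times -m..n+k, L = m+n+k, time t at position t+m *)
Definition J_approx {Xs Rs : finType} (law : forall n, window Xs Rs n -> R) (k m n : nat) : R :=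
  CMI law (m + n + k) (iota 0 m.+1, [::]) ([::], [:: m])
       (iota m.+1 (n + k), [:: (m + k)%nat]).

(* Main.v *)
Require Import Defs.
From HB Require Import structures.
From mathcomp Require Import all_boot zify.
From Stdlib Require Import Reals Lra.
Local Open Scope R_scope.

Lemma RpA : associative Rplus. Proof. move=> x y z; ring. Qed.
HB.instance Definition _ := Monoid.isComLaw.Build R 0 Rplus RpA Rplus_comm Rplus_0_l.
Lemma Rm0l : left_zero 0 Rmult. Proof. move=> x; ring. Qed.
Lemma Rm0r : right_zero 0 Rmult. Proof. move=> x; ring. Qed.
HB.instance Definition _ := Monoid.isMulLaw.Build R 0 Rmult Rm0l Rm0r.
Lemma Rdl : left_distributive Rmult Rplus. Proof. move=> x y z; ring. Qed.
Lemma Rdr : right_distributive Rmult Rplus. Proof. move=> x y z; ring. Qed.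
HB.instance Definition _ := Monoid.isAddLaw.Build R Rmult Rplus Rdl Rdr.

Lemma sumN (I : Type) (r : seq I) (P : pred I) (F : I -> R) :
  \big[Rplus/0]_(i <- r | P i) (- F i) = - \big[Rplus/0]_(i <- r | P i) F i.
Proof. apply: (big_rec2 (fun x y => x = - y)); first lra. move=> i x y _ ->; lra. Qed.

Lemma sumD (I : Type) (r : seq I) (P : pred I) (F G : I -> R) :
  \big[Rplus/0]_(i <- r | P i) (F i + G i) = \big[Rplus/0]_(i <- r | P i) F i + \big[Rplus/0]_(i <- r | P i) G i.
Proof. exact: big_split. Qed.

Lemma sum_ge0 (I : Type) (r : seq I) (P : pred I) (F : I -> R) :
  (forall i, P i -> 0 <= F i) -> 0 <= \big[Rplus/0]_(i <- r | P i) F i.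
Proof. move=> H; apply: big_ind => //; [lra| move=> x y; lra]. Qed.

Lemma sum_le (I : Type) (r : seq I) (P : pred I) (F G : I -> R) :
  (forall i, P i -> F i <= G i) ->
  \big[Rplus/0]_(i <- r | P i) F i <= \big[Rplus/0]_(i <- r | P i) G i.
Proof. move=> H; apply: big_ind2 => //; [lra| move=> x1 x2 y1 y2; lra]. Qed.

Lemma ln_le_sub1 y : 0 < y -> ln y <= y - 1.
Proof. move=> hy; have := exp_ineq1_le (ln y); rewrite exp_ln //; lra. Qed.

Lemma Rinv_ge0 x : 0 <= x -> 0 <= / x.
Proof.
move=> hx; case: (Req_dec x 0) => [->|hx0]; first (rewrite Rinv_0; lra).
left; apply: Rinv_0_lt_compat; lra.
Qed.

Section Gen.
Variables (W : finType) (mu : W -> R).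
Hypothesis mu_ge0 : forall w, 0 <= mu w.

Definition pr {T : eqType} (k : W -> T) (w : W) : R :=
  \big[Rplus/0]_(w' | k w' == k w) mu w'.
Definition gent {T : eqType} (k : W -> T) : R :=
  - \big[Rplus/0]_w (mu w * ln (pr k w)).

Lemma pr_ge {T : eqType} (k : W -> T) w : mu w <= pr k w.
Proof.
rewrite /pr (bigD1 w) //=.
have := sum_ge0 _ (index_enum W) (fun i => (k i == k w) && (i != w)) mu (fun i _ => mu_ge0 i).
lra.
Qed.

Lemma pr_key {T : eqType} {k : W -> T} {w w0} : k w = k w0 -> pr k w = pr k w0.
Proof. by move=> e; rewrite /pr e. Qed.

Lemma gent_eq (T1 T2 : eqType) (k1 : W -> T1) (k2 : W -> T2) :
  (forall w w', (k1 w' == k1 w) = (k2 w' == k2 w)) -> gent k1 = gent k2.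
Proof.
move=> H; rewrite /gent; congr (- _); apply: eq_bigr => w _.
by congr (_ * ln _); apply: eq_bigl => w'; exact: H.
Qed.


Lemma pr_ge0 {T : eqType} (k : W -> T) w : 0 <= pr k w.
Proof. apply: sum_ge0 => i _; exact: mu_ge0. Qed.

Lemma cmi_ge0 (T1 T2 T3 : eqType) (fa : W -> T1) (fb : W -> T2) (fc : W -> T3) :
  0 <= gent (fun w => (fa w, fc w)) + gent (fun w => (fb w, fc w))
       - gent (fun w => (fa w, fb w, fc w)) - gent fc.
Proof.
set kA := (fun w => (fa w, fc w)); set kB := (fun w => (fb w, fc w)).
set kABC := (fun w => (fa w, fb w, fc w)).
set Y := fun w => pr kA w * pr kB w / (pr kABC w * pr fc w).
have E : gent kA + gent kB - gent kABC - gent fc =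
   - \big[Rplus/0]_w (mu w * (ln (pr kA w) + ln (pr kB w) - ln (pr kABC w) - ln (pr fc w))).
{ have E1 : \big[Rplus/0]_w (mu w * (ln (pr kA w) + ln (pr kB w) - ln (pr kABC w) - ln (pr fc w)))
     = \big[Rplus/0]_w (mu w * ln (pr kA w)) + \big[Rplus/0]_w (mu w * ln (pr kB w))
       + (- \big[Rplus/0]_w (mu w * ln (pr kABC w))) + (- \big[Rplus/0]_w (mu w * ln (pr fc w))).
  { rewrite (eq_bigr (fun w => mu w * ln (pr kA w) + mu w * ln (pr kB w)
     + - (mu w * ln (pr kABC w)) + - (mu w * ln (pr fc w)))); last by move=> w _; ring.
    rewrite !big_split /= !sumN; ring. }
  rewrite E1 /gent; ring. }
rewrite E.
have HT1 : \big[Rplus/0]_w (mu w * (ln (pr kA w) + ln (pr kB w) - ln (pr kABC w) - ln (pr fc w)))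
   <= \big[Rplus/0]_w (mu w * Y w + - mu w).
{ apply: sum_le => w _.
  case: (Req_dec (mu w) 0) => [->|hm]; first lra.
  have hm' : 0 < mu w by have := mu_ge0 w; lra.
  have pA := pr_ge kA w; have pB := pr_ge kB w; have pABC := pr_ge kABC w.
  have pC := pr_ge fc w.
  have -> : ln (pr kA w) + ln (pr kB w) - ln (pr kABC w) - ln (pr fc w) = ln (Y w).
  { rewrite /Y /Rdiv ln_mult; last first.
    - apply: Rinv_0_lt_compat; apply: Rmult_lt_0_compat; lra.
    - apply: Rmult_lt_0_compat; lra.
    rewrite ln_Rinv; last by apply: Rmult_lt_0_compat; lra.
    rewrite !ln_mult; lra. }
  have hY : 0 < Y w.
  { rewrite /Y /Rdiv; apply: Rmult_lt_0_compat; first (apply: Rmult_lt_0_compat; lra).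
    apply: Rinv_0_lt_compat; apply: Rmult_lt_0_compat; lra. }
  have hl := ln_le_sub1 _ hY.
  have := Rmult_le_compat_l (mu w) _ _ (mu_ge0 w) hl. lra. }
set F := fun w w1 w2 => if (kA w1 == kA w) && (kB w2 == kB w)
           then mu w1 * mu w2 * (mu w / (pr kABC w * pr fc w)) else 0.
have Hexp : forall w, mu w * Y w = \big[Rplus/0]_w1 \big[Rplus/0]_w2 F w w1 w2.
{ move=> w.
  have -> : mu w * Y w = pr kA w * (pr kB w * (mu w / (pr kABC w * pr fc w))).
  { rewrite /Y /Rdiv; ring. }
  rewrite [pr kA w]/pr [pr kB w]/pr (big_mkcond (fun w1 => kA w1 == kA w)) big_distrl /=.
  apply: eq_bigr => w1 _.
  rewrite (big_mkcond (fun w2 => kB w2 == kB w)) big_distrl big_distrr /=.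
  apply: eq_bigr => w2 _.
  rewrite /F; case: (kA w1 == kA w); case: (kB w2 == kB w) => /=; ring. }
have Hin : forall w1 w2, \big[Rplus/0]_w F w w1 w2 <=
    mu w1 * mu w2 * (if fc w2 == fc w1 then / pr fc w1 else 0).
{ move=> w1 w2.
  have Hnn : 0 <= mu w1 * mu w2 * (if fc w2 == fc w1 then / pr fc w1 else 0).
  { apply: Rmult_le_pos; first (apply: Rmult_le_pos; exact: mu_ge0).
    case: ifP => _; [apply: Rinv_ge0; exact: pr_ge0 | lra]. }
  case: (pickP (fun w => (kA w1 == kA w) && (kB w2 == kB w))) => [w0 H0 | Hn]; last first.
  { rewrite big1 // => w _; by rewrite /F Hn. }
  move/andP: H0 => [/eqP e1 /eqP e2].
  case: e1 => ea ec; case: e2 => eb ec2.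
  have -> : (fc w2 == fc w1) by rewrite ec2 ec.
  rewrite (eq_bigr (fun w => if kABC w == kABC w0 then
       mu w1 * mu w2 * (mu w * / (pr kABC w0 * pr fc w1)) else 0)); last first.
  { move=> w _; rewrite /F.
    have -> : (kA w1 == kA w) && (kB w2 == kB w) = (kABC w == kABC w0).
    { rewrite /kA /kB /kABC !xpair_eqE ea ec eb ec2.
      by case: (fa w0 == fa w) (eq_sym (fa w0) (fa w)) (eq_sym (fb w0) (fb w)) (eq_sym (fc w0) (fc w));
         case: (fb w0 == fb w); case: (fc w0 == fc w) => /= <- <- <-. }
    case: ifP => // /eqP e.
    rewrite (pr_key e) /Rdiv; congr (_ * (_ * / (_ * _))).
    apply: pr_key; rewrite ec; by case: e. }
  rewrite -big_mkcond -big_distrr -big_distrl /=.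
  change (\big[Rplus/0]_(w | kABC w == kABC w0) mu w) with (pr kABC w0).
  have hc : 0 <= mu w1 * mu w2 by apply: Rmult_le_pos; exact: mu_ge0.
  apply: Rmult_le_compat_l => //.
  have p0 := pr_ge0 kABC w0; have p1 := pr_ge0 fc w1.
  case: (Req_dec (pr fc w1) 0) => [->|h1].
  { rewrite Rmult_0_r Rinv_0; lra. }
  case: (Req_dec (pr kABC w0) 0) => [->|h0].
  { rewrite Rmult_0_l; apply: Rinv_ge0; lra. }
  right; field; split; lra. }
have HT2 : \big[Rplus/0]_w (mu w * Y w) <= \big[Rplus/0]_w mu w.
{ rewrite (eq_bigr _ (fun w _ => Hexp w)) exchange_big.
  apply: sum_le => w1 _.
  rewrite exchange_big.
  apply: Rle_trans (sum_le _ _ _ _ _ (fun w2 _ => Hin w1 w2)) _.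
  have -> : \big[Rplus/0]_w2 (mu w1 * mu w2 * (if fc w2 == fc w1 then / pr fc w1 else 0))
      = mu w1 * / pr fc w1 * pr fc w1.
  { rewrite /pr (big_mkcond (fun w2 => fc w2 == fc w1)) big_distrr /=.
    apply: eq_bigr => w2 _; case: ifP => _; ring. }
  case: (Req_dec (mu w1) 0) => [->|hm]; first lra.
  have := pr_ge fc w1; have := mu_ge0 w1 => ? ?.
  right; field; lra. }
rewrite big_split sumN /= in HT1.
lra.
Qed.

End Gen.
Arguments pr {W} mu {T} k w.
Arguments gent {W} mu {T} k.
Arguments cmi_ge0 {W} mu mu_ge0 {T1 T2 T3} fa fb fc.
Arguments gent_eq {W} mu {T1 T2} k1 k2.
Arguments pr_ge {W} mu mu_ge0 {T} k w.

Lemma gent_push (W1 W2 : finType) (mu1 : W1 -> R) (mu2 : W2 -> R) (f : W1 -> W2)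
  (T : eqType) (k1 : W1 -> T) (k2 : W2 -> T) :
  (forall u, mu2 u = \big[Rplus/0]_(w | f w == u) mu1 w) ->
  (forall w, k1 w = k2 (f w)) -> gent mu1 k1 = gent mu2 k2.
Proof.
move=> Hm Hk.
have Hp : forall w, pr mu1 k1 w = pr mu2 k2 (f w).
{ move=> w; rewrite /pr.
  rewrite (partition_big f (fun u => k2 u == k2 (f w))) /=; last by move=> i; rewrite !Hk.
  apply: eq_bigr => u /eqP hu; rewrite Hm; apply: eq_bigl => i.
  apply/andP/idP => [[]//|hi]; split => //.
  rewrite !Hk (eqP hi); exact/eqP. }
rewrite /gent; congr (- _).
rewrite (eq_bigr (fun w => mu1 w * ln (pr mu2 k2 (f w)))); last by move=> w _; rewrite Hp.
rewrite (partition_big f xpredT) //=.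
apply: eq_bigr => u _; rewrite Hm big_distrl /=.
by apply: eq_bigr => w /eqP ->.
Qed.

Lemma proj_eq (Xs Rs : finType) L sx sr (w w' : window Xs Rs L.+1) :
  (proj L sx sr w' == proj L sx sr w) =
  all (fun i => (w' (inord i)).1 == (w (inord i)).1) sx &&
  all (fun i => (w' (inord i)).2 == (w (inord i)).2) sr.
Proof.
rewrite /proj xpair_eqE; congr andb.
- by elim: sx => //= i s <-; rewrite eqseq_cons.
- by elim: sr => //= i s <-; rewrite eqseq_cons.
Qed.

Section Win.
Variables (Xs Rs : finType) (law : forall n, window Xs Rs n -> R).
Hypothesis law_ge0 : forall n w, 0 <= law n w.

Lemma H_gent L (a : var) : H law L a = gent (law L.+1) (proj L a.1 a.2).
Proof. by []. Qed.

Lemma H_mem L (a b : var) : a.1 =i b.1 -> a.2 =i b.2 -> H law L a = H law L b.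
Proof.
move=> e1 e2; rewrite !H_gent; apply: gent_eq => w w'.
by rewrite !proj_eq (eq_all_r e1) (eq_all_r e2).
Qed.

Ltac pe := repeat match goal with |- context [proj ?L ?x ?y ?w' == proj ?L ?x ?y ?w] => rewrite (proj_eq _ _ L x y w w') end.

Lemma CMI_ge0 L a b c : 0 <= CMI law L a b c.
Proof.
have := cmi_ge0 (law L.+1) (law_ge0 L.+1) (proj L a.1 a.2) (proj L b.1 b.2) (proj L c.1 c.2).
rewrite /CMI !H_gent.
rewrite (gent_eq _ (proj L (vjoin a c).1 (vjoin a c).2)
   (fun w => (proj L a.1 a.2 w, proj L c.1 c.2 w))); last first.
{ move=> w w'; cbv beta; pe; rewrite xpair_eqE; pe; rewrite /vjoin /= !all_cat; by repeat match goal with |- context [all ?p ?s] => case: (all p s) end. }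
rewrite (gent_eq _ (proj L (vjoin b c).1 (vjoin b c).2)
   (fun w => (proj L b.1 b.2 w, proj L c.1 c.2 w))); last first.
{ move=> w w'; cbv beta; pe; rewrite xpair_eqE; pe; rewrite /vjoin /= !all_cat; by repeat match goal with |- context [all ?p ?s] => case: (all p s) end. }
rewrite (gent_eq _ (proj L (vjoin (vjoin a b) c).1 (vjoin (vjoin a b) c).2)
   (fun w => (proj L a.1 a.2 w, proj L b.1 b.2 w, proj L c.1 c.2 w))); last first.
{ move=> w w'; cbv beta; pe; rewrite xpair_eqE xpair_eqE; pe; rewrite /vjoin /= !all_cat; by repeat match goal with |- context [all ?p ?s] => case: (all p s) end. }
done.
Qed.


Definition bounded (a : var) (M : nat) :=
  (forall i, i \in a.1 -> (i <= M)%nat) /\ (forall i, i \in a.2 -> (i <= M)%nat).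
Definition vshift (d : nat) (a : var) : var := (map (addn d) a.1, map (addn d) a.2).

Lemma mem_map_addn d s i : (i \in map (addn d) s) = (d <= i)%nat && ((i - d)%nat \in s).
Proof.
apply/mapP/andP => [[j hj ->]|[hd hs]].
- by rewrite leq_addr addKn.
- by exists (i - d)%nat => //; rewrite subnKC.
Qed.

Ltac memtac := let i := fresh in move=> i; rewrite /= ?(mem_cat, mem_iota, in_cons, in_nil, mem_seq1, mem_map_addn); lia.

Lemma CMI_sym L a b c : CMI law L a b c = CMI law L b a c.
Proof.
rewrite /CMI (H_mem L (vjoin (vjoin a b) c) (vjoin (vjoin b a) c)); first ring.
- by move=> i; rewrite /= !mem_cat; case: (i \in a.1); case: (i \in b.1).
- by move=> i; rewrite /= !mem_cat; case: (i \in a.2); case: (i \in b.2).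
Qed.

Lemma CMI_mono_l L a a2 b c :
  {subset a.1 <= a2.1 ++ c.1} -> {subset a.2 <= a2.2 ++ c.2} ->
  CMI law L a b c <= CMI law L a2 b c.
Proof.
move=> s1 s2.
have := CMI_ge0 L a2 b (vjoin a c).
rewrite /CMI.
rewrite (H_mem L (vjoin a2 (vjoin a c)) (vjoin a2 c)); last first.
- move=> i; move: (s2 i); rewrite /= !mem_cat.
  by case: (i \in a.2); case: (i \in a2.2); case: (i \in c.2) => // /(_ isT).
- move=> i; move: (s1 i); rewrite /= !mem_cat.
  by case: (i \in a.1); case: (i \in a2.1); case: (i \in c.1) => // /(_ isT).
rewrite (H_mem L (vjoin (vjoin a2 b) (vjoin a c)) (vjoin (vjoin a2 b) c)); last first.
- move=> i; move: (s2 i); rewrite /= !mem_cat.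
  by case: (i \in a.2); case: (i \in a2.2); case: (i \in b.2); case: (i \in c.2) => // /(_ isT).
- move=> i; move: (s1 i); rewrite /= !mem_cat.
  by case: (i \in a.1); case: (i \in a2.1); case: (i \in b.1); case: (i \in c.1) => // /(_ isT).
rewrite (H_mem L (vjoin b (vjoin a c)) (vjoin (vjoin a b) c)); last first.
- move=> i; rewrite /= !mem_cat.
  by case: (i \in a.2); case: (i \in b.2); case: (i \in c.2).
- move=> i; rewrite /= !mem_cat.
  by case: (i \in a.1); case: (i \in b.1); case: (i \in c.1).
lra.
Qed.

Lemma H_mono L a c : H law L c <= H law L (vjoin a c).
Proof.
have := CMI_ge0 L a a c; rewrite /CMI.
rewrite (H_mem L (vjoin (vjoin a a) c) (vjoin a c)); first lra.
- by move=> i; rewrite /= !mem_cat; case: (i \in a.1).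
- by move=> i; rewrite /= !mem_cat; case: (i \in a.2).
Qed.

Hypothesis law_init : forall n (w : window Xs Rs n),
  law n w = \big[Rplus/0]_(w' : window Xs Rs n.+1 | winit n w' == w) law n.+1 w'.
Hypothesis law_tail : forall n (w : window Xs Rs n),
  law n w = \big[Rplus/0]_(w' : window Xs Rs n.+1 | wtail n w' == w) law n.+1 w'.

Lemma H_ext1 L a : bounded a L -> H law L a = H law L.+1 a.
Proof.
move=> [h1 h2]; rewrite !H_gent; symmetry.
apply: (gent_push _ _ _ _ (winit L.+1)); first by move=> u; exact: law_init.
move=> w; rewrite /proj; congr pair; apply/eq_in_map => i hi /=; rewrite /winit ffunE.
- congr (w _).1; apply/val_inj; rewrite /= !inordK //; have := h1 _ hi; lia.
- congr (w _).2; apply/val_inj; rewrite /= !inordK //; have := h2 _ hi; lia.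
Qed.

Lemma H_shift1 L a : bounded a L -> H law L a = H law L.+1 (vshift 1 a).
Proof.
move=> [h1 h2]; rewrite !H_gent; symmetry.
apply: (gent_push _ _ _ _ (wtail L.+1)); first by move=> u; exact: law_tail.
move=> w; rewrite /proj /vshift /= -!map_comp; congr pair; apply/eq_in_map => i hi /=;
  rewrite /wtail ffunE.
- congr (w _).1; apply/ord_inj; rewrite lift0 /= !inordK //; have := h1 _ hi; lia.
- congr (w _).2; apply/ord_inj; rewrite lift0 /= !inordK //; have := h2 _ hi; lia.
Qed.

Lemma H_shift d M a : bounded a M -> H law M a = H law (M + d) (vshift d a).
Proof.
move=> hb; elim: d => [|d IH].
- rewrite addn0; apply: H_mem => i; rewrite /= mem_map_addn subn0 //.
- rewrite addnS IH (H_shift1 (M + d) (vshift d a)); last first.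
  { case: hb => h1 h2; split => i; rewrite /= mem_map_addn => /andP [hd hi].
    + have := h1 _ hi; lia.
    + have := h2 _ hi; lia. }
  apply: H_mem => i; rewrite /= !mem_map_addn.
  + case: (boolP (1 <= i)%nat) => h /=; last by have -> : (d.+1 <= i)%nat = false by lia.
    case: (boolP (d <= i - 1)%nat) => h' /=.
    * have -> : (d.+1 <= i)%nat by lia.
      by have -> : (i - 1 - d = i - d.+1)%nat by lia.
    * by have -> : (d.+1 <= i)%nat = false by lia.
  + case: (boolP (1 <= i)%nat) => h /=; last by have -> : (d.+1 <= i)%nat = false by lia.
    case: (boolP (d <= i - 1)%nat) => h' /=.
    * have -> : (d.+1 <= i)%nat by lia.
      by have -> : (i - 1 - d = i - d.+1)%nat by lia.
    * by have -> : (d.+1 <= i)%nat = false by lia.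
Qed.

Lemma H_ext M N a : bounded a M -> (M <= N)%nat -> H law M a = H law N a.
Proof.
move=> hb; elim: N => [|N IH] hle.
- by have -> : M = 0%nat by lia.
- case: (boolP (M == N.+1)) => [/eqP -> //|hne].
  rewrite IH; last by lia.
  apply: H_ext1; case: hb => h1 h2; split => i hi.
  + have := h1 _ hi; lia.
  + have := h2 _ hi; lia.
Qed.

Hypothesis Hgen : generator_cond law.

Lemma gen_ent L t : (t <= L)%nat ->
  let past := (iota 0 t.+1, iota 0 t) in
  let rt := ([::], [:: t]) in
  let fut := (iota t.+1 (L - t)%nat, iota t.+1 (L - t)%nat) in
  H law L (vjoin (vjoin past rt) fut) + H law L rt
  = H law L (vjoin past rt) + H law L (vjoin rt fut).
Proof.
move=> ht past rt fut.
have E : forall w : window Xs Rs L.+1,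
  law L.+1 w * (ln (prob law L (vjoin (vjoin past rt) fut).1 (vjoin (vjoin past rt) fut).2 w)
                + ln (prob law L rt.1 rt.2 w))
  = law L.+1 w * (ln (prob law L (vjoin past rt).1 (vjoin past rt).2 w)
                + ln (prob law L (vjoin rt fut).1 (vjoin rt fut).2 w)).
{ move=> w.
  case: (Req_dec (law L.+1 w) 0) => [->|hm]; first ring.
  have hm' : 0 < law L.+1 w by have := law_ge0 L.+1 w; lra.
  have q := fun sx sr => pr_ge _ (law_ge0 L.+1) (proj L sx sr) w.
  have q1 : 0 < prob law L (vjoin (vjoin past rt) fut).1 (vjoin (vjoin past rt) fut).2 w
    := Rlt_le_trans _ _ _ hm' (q _ _).
  have q2 : 0 < prob law L rt.1 rt.2 w := Rlt_le_trans _ _ _ hm' (q _ _).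
  have q3 : 0 < prob law L (vjoin past rt).1 (vjoin past rt).2 w := Rlt_le_trans _ _ _ hm' (q _ _).
  have q4 : 0 < prob law L (vjoin rt fut).1 (vjoin rt fut).2 w := Rlt_le_trans _ _ _ hm' (q _ _).
  rewrite -!ln_mult //.
  congr (_ * ln _); exact: (Hgen L t w ht). }
clearbody past rt fut.
rewrite /H /ent.
rewrite -!Ropp_plus_distr; congr (- _).
rewrite -sumD -sumD.
apply: eq_bigr => w _; rewrite -!Rmult_plus_distr_l; exact: E w.
Qed.

Lemma gen_indep L t (A B : var) : (t <= L)%nat ->
  {subset A.1 <= iota 0 t.+1} -> {subset A.2 <= iota 0 t.+1} ->
  {subset B.1 <= iota t.+1 (L - t)%nat} -> {subset B.2 <= iota t.+1 (L - t)%nat} ->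
  H law L (vjoin (vjoin A B) ([::], [:: t])) =
  H law L (vjoin A ([::], [:: t])) + H law L (vjoin B ([::], [:: t])) - H law L ([::], [:: t]).
Proof.
move=> ht sa1 sa2 sb1 sb2.
set rt := ([::], [:: t]).
set past := (iota 0 t.+1, iota 0 t).
set fut := (iota t.+1 (L - t)%nat, iota t.+1 (L - t)%nat).
have h0 : CMI law L past fut rt = 0.
{ have := gen_ent L t ht; rewrite -/past -/rt -/fut /CMI.
  rewrite (H_mem L (vjoin (vjoin past rt) fut) (vjoin (vjoin past fut) rt)); [|memtac|memtac].
  rewrite (H_mem L (vjoin rt fut) (vjoin fut rt)); [lra|memtac|memtac].
}
have m1 : CMI law L A B rt <= CMI law L past B rt.
{ apply: CMI_mono_l => i hi; [move: (sa1 _ hi) | move: (sa2 _ hi)];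
  rewrite /past /rt /= ?(mem_cat, mem_iota, in_cons, in_nil, mem_seq1); lia. }
have m2 : CMI law L B past rt <= CMI law L fut past rt.
{ apply: CMI_mono_l => i hi; [move: (sb1 _ hi) | move: (sb2 _ hi)];
  rewrite /fut /rt /= ?(mem_cat, mem_iota, in_cons, in_nil, mem_seq1); lia. }
have g0 := CMI_ge0 L A B rt.
rewrite CMI_sym in m2; rewrite (CMI_sym L fut) in m2.
move: m1 m2 g0 h0; rewrite /CMI; lra.
Qed.

Lemma bounded_join a b M : bounded a M -> bounded b M -> bounded (vjoin a b) M.
Proof.
move=> [a1 a2] [b1 b2]; split => i; rewrite mem_cat => /orP [] h.
- exact: a1. - exact: b1. - exact: a2. - exact: b2.
Qed.

Lemma vshift_join d a b : vshift d (vjoin a b) = vjoin (vshift d a) (vshift d b).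
Proof. by rewrite /vshift /vjoin /= !map_cat. Qed.

Lemma CMI_shift d M a b c : bounded a M -> bounded b M -> bounded c M ->
  CMI law M a b c = CMI law (M + d) (vshift d a) (vshift d b) (vshift d c).
Proof.
move=> ha hb hc; rewrite /CMI.
rewrite (H_shift d M (vjoin a c)); last by repeat apply: bounded_join.
rewrite (H_shift d M (vjoin b c)); last by repeat apply: bounded_join.
rewrite (H_shift d M (vjoin (vjoin a b) c)); last by repeat apply: bounded_join.
rewrite (H_shift d M c) //.
by rewrite !vshift_join.
Qed.

Lemma MI_shift d M a b : bounded a M -> bounded b M ->
  MI law M a b = MI law (M + d) (vshift d a) (vshift d b).
Proof.
move=> ha hb; rewrite /MI.
rewrite (H_shift d M a) // (H_shift d M b) //.
rewrite (H_shift d M (vjoin a b)); last by repeat apply: bounded_join.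
by rewrite !vshift_join.
Qed.

Lemma MI_ext M N a b : bounded a M -> bounded b M -> (M <= N)%nat ->
  MI law M a b = MI law N a b.
Proof.
move=> ha hb hle; rewrite /MI.
rewrite (H_ext M N a) // (H_ext M N b) //.
by rewrite (H_ext M N (vjoin a b)) //; repeat apply: bounded_join.
Qed.

Lemma CMI_ext M N a b c : bounded a M -> bounded b M -> bounded c M -> (M <= N)%nat ->
  CMI law M a b c = CMI law N a b c.
Proof.
move=> ha hb hc hle; rewrite /CMI.
rewrite (H_ext M N (vjoin a c)) //; last by repeat apply: bounded_join.
rewrite (H_ext M N (vjoin b c)) //; last by repeat apply: bounded_join.
rewrite (H_ext M N (vjoin (vjoin a b) c)) //; last by repeat apply: bounded_join.
by rewrite (H_ext M N c).
Qed.

Lemma CMI_mono_r L a b b2 c :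
  {subset b.1 <= b2.1 ++ c.1} -> {subset b.2 <= b2.2 ++ c.2} ->
  CMI law L a b c <= CMI law L a b2 c.
Proof.
move=> s1 s2; rewrite (CMI_sym L a b) (CMI_sym L a b2); exact: CMI_mono_l.
Qed.

Lemma CMI_le L a b c : CMI law L a b c <= H law L (vjoin a c) - H law L c.
Proof.
have := H_mono L a (vjoin b c); rewrite /CMI.
rewrite (H_mem L (vjoin a (vjoin b c)) (vjoin (vjoin a b) c)); first lra.
- by move=> i; rewrite /= !mem_cat; case: (i \in a.1); case: (i \in b.1); case: (i \in c.1).
- by move=> i; rewrite /= !mem_cat; case: (i \in a.2); case: (i \in b.2); case: (i \in c.2).
Qed.

Lemma CMI_drop_future L t a b c f : (t <= L)%nat -> t \in c.2 ->
  {subset a.1 <= iota 0 t.+1} -> {subset a.2 <= iota 0 t.+1} ->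
  {subset b.1 <= iota 0 t.+1} -> {subset b.2 <= iota 0 t.+1} ->
  {subset c.1 <= iota 0 t.+1} -> {subset c.2 <= iota 0 t.+1} ->
  {subset f.1 <= iota t.+1 (L - t)%nat} -> {subset f.2 <= iota t.+1 (L - t)%nat} ->
  CMI law L a b (vjoin c f) = CMI law L a b c.
Proof.
move=> ht htc sa1 sa2 sb1 sb2 sc1 sc2 sf1 sf2.
have K : forall S : var, {subset S.1 <= iota 0 t.+1} -> {subset S.2 <= iota 0 t.+1} ->
  H law L (vjoin S (vjoin c f)) = H law L (vjoin S c) + H law L (vjoin f ([::], [:: t])) - H law L ([::], [:: t]).
{ move=> S s1 s2.
  rewrite (H_mem L (vjoin S (vjoin c f)) (vjoin (vjoin (vjoin S c) f) ([::], [:: t]))); last first.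
  - move=> i; rewrite /= !mem_cat mem_seq1.
    case: (eqVneq i t) => [->|_]; rewrite ?htc ?orbT ?orbF //=.
    by case: (i \in S.2); case: (i \in c.2); case: (i \in f.2).
  - move=> i; rewrite /= !mem_cat.
    by case: (i \in S.1); case: (i \in c.1); case: (i \in f.1).
  rewrite gen_indep //; last first.
  - move=> i; rewrite mem_cat => /orP [] h; [exact: s2 | exact: sc2].
  - move=> i; rewrite mem_cat => /orP [] h; [exact: s1 | exact: sc1].
  rewrite (H_mem L (vjoin (vjoin S c) ([::], [:: t])) (vjoin S c)) //.
  - move=> i; rewrite /= !mem_cat.
    by case: (i \in S.1); case: (i \in c.1).
  - move=> i; rewrite /= !mem_cat mem_seq1.
    case: (eqVneq i t) => [->|_]; rewrite ?htc ?orbT ?orbF //=. }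
rewrite /CMI (K a) // (K b) //.
rewrite (K (vjoin a b)); last first.
- move=> i; rewrite mem_cat => /orP [] h; [exact: sa2 | exact: sb2].
- move=> i; rewrite mem_cat => /orP [] h; [exact: sa1 | exact: sb1].
rewrite (H_mem L (vjoin c f) (vjoin ([::], [::]) (vjoin c f))) //.
rewrite (K ([::], [::])) //.
rewrite (H_mem L (vjoin ([::], [::]) c) c) //.
lra.
Qed.

Lemma CMI_mem L a b c a' b' c' : a.1 =i a'.1 -> a.2 =i a'.2 -> b.1 =i b'.1 -> b.2 =i b'.2 ->
  c.1 =i c'.1 -> c.2 =i c'.2 -> CMI law L a b c = CMI law L a' b' c'.
Proof.
move=> a1 a2 b1 b2 c1 c2; rewrite /CMI.
congr (_ + _ - _ - _); apply: H_mem => i //=; rewrite !mem_cat;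
  by rewrite ?(a1 i) ?(b1 i) ?(c1 i) ?(a2 i) ?(b2 i) ?(c2 i).
Qed.
End Win.



Ltac bnd := split => ?; rewrite /= ?(mem_cat, mem_iota, in_cons, in_nil, mem_seq1, mem_map_addn); lia.
Ltac memtac := let i := fresh in move=> i; rewrite /= ?(mem_cat, mem_iota, in_cons, in_nil, mem_seq1, mem_map_addn); lia.
Ltac sub := let i := fresh in move=> i; rewrite /= ?(mem_cat, mem_iota, in_cons, in_nil, mem_seq1, mem_map_addn); lia.

Ltac side := first [ sub | (rewrite /= ?(mem_seq1, inE); lia) ].

Lemma cv_ev (u v : nat -> R) l N : (forall n, (N <= n)%nat -> v n = u n) -> Un_cv u l -> Un_cv v l.
Proof.
move=> e cu eps he; case: (cu eps he) => N0 hN.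
exists (N0 + N)%nat => n hn; rewrite e; last lia.
apply: hN; lia.
Qed.

Lemma cv_subk (u : nat -> R) l k : Un_cv u l -> Un_cv (fun m => u (m - k)%nat) l.
Proof.
move=> cu eps he; case: (cu eps he) => N0 hN.
exists (N0 + k)%nat => n hn; apply: hN; lia.
Qed.

Lemma cv_const c : Un_cv (fun _ => c) c.
Proof. move=> eps he; exists 0%nat => n _; rewrite /Rdist Rminus_diag Rabs_R0; lra. Qed.

Lemma cv_dlim (u : nat -> R) l (J : nat -> nat -> R) : Un_cv u l -> (forall m n, J m n = u m) -> dlim J l.
Proof.
move=> cu e eps he; case: (cu eps he) => N0 hN.
exists N0 => m n hm hn; rewrite e; apply: hN; lia.
Qed.

Theorem mainTheorem11 (Xs Rs : finType) (law : forall n, window Xs Rs n -> R)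
  (Hlaw : stationary_law law) (Hgen : generator_cond law) (k : nat) (hk : (1 <= k)%nat) :
  H law k (vjoin ([::], [:: k]) (X1k k)) - H law k (vjoin ([::], [:: 0%nat]) (X1k k))
    = MI law k ([::], [:: 0%nat]) (X1k k) - MI law k ([::], [:: k]) (X1k k) /\
  exists zeta J : R,
    Un_cv (fun m => zeta_approx law k m) zeta /\
    dlim (fun m n => J_approx law k m n) J /\
    MI law k ([::], [:: 0%nat]) (X1k k) - MI law k ([::], [:: k]) (X1k k) = zeta - J.
Proof.
case: Hlaw => ge0 [_ [Hi Ht]].
have Hm := H_mem Xs Rs law.
have Hsh := H_shift Xs Rs law Ht.
have Hex := H_ext Xs Rs law Hi.
have Csh := CMI_shift Xs Rs law Ht.
have Msh := MI_shift Xs Rs law Ht.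
have Mex := MI_ext Xs Rs law Hi.
have Cex := CMI_ext Xs Rs law Hi.
have Cge := CMI_ge0 Xs Rs law ge0.
have Cmr := CMI_mono_r Xs Rs law ge0.
have Cle := CMI_le Xs Rs law ge0.
have Gi := gen_indep Xs Rs law ge0 Hgen.
have Cdf := CMI_drop_future Xs Rs law ge0 Hgen.
have Hmono := H_mono Xs Rs law ge0.
have Cmem := CMI_mem Xs Rs law.
have hR : H law k ([::], [:: 0%nat]) = H law k ([::], [:: k]).
{ rewrite -(Hex 0%nat k ([::], [:: 0%nat])); [|bnd|lia].
  rewrite (Hsh k 0%nat); [|bnd]. rewrite add0n; apply: Hm; memtac. }
split; first by rewrite /MI; lra.
set C := MI law k ([::], [:: 0%nat]) (X1k k) - MI law k ([::], [:: k]) (X1k k).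
pose h := fun m => H law (m + k) (vjoin (iota m.+1 k, [::]) (iota 0 m.+1, [::])) - H law (m + k) (iota 0 m.+1, [::]).
pose c1 := H law k (iota 1 k, [:: 0%nat]) - H law k ([::], [:: 0%nat]).
have Fz : forall m, zeta_approx law k m = h m - c1.
{ move=> m; rewrite /zeta_approx /CMI /h /c1; cbv beta.
  have g1 := Gi (m+k)%nat m (iota 0 m.+1, [::]) (iota m.+1 k, [::]).
  rewrite (Hm (m+k)%nat (vjoin (vjoin (iota m.+1 k, [::]) ([::], [:: m])) (iota 0 m.+1, [::])) (vjoin (vjoin (iota 0 m.+1, [::]) (iota m.+1 k, [::])) ([::], [:: m]))); [|memtac|memtac].
  rewrite g1; [|lia|sub|sub|sub|sub].
  rewrite (Hm (m+k)%nat (vjoin ([::], [:: m]) (iota 0 m.+1, [::])) (vjoin (iota 0 m.+1, [::]) ([::], [:: m]))); [|memtac|memtac].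
  have t1 : H law k (iota 1 k, [:: 0%nat]) = H law (m + k) (vjoin (iota m.+1 k, [::]) ([::], [:: m])).
  { rewrite (Hsh m k); [|bnd]. have -> : (k + m = m + k)%nat by lia. apply: Hm; memtac. }
  have t2 : H law k ([::], [:: 0%nat]) = H law (m + k) ([::], [:: m]).
  { rewrite (Hsh m k); [|bnd]. have -> : (k + m = m + k)%nat by lia. apply: Hm; memtac. }
  rewrite t1 t2. ring. }
have hdec : forall m, h m.+1 <= h m.
{ move=> m; rewrite /h; cbv beta.
  have c := Cge (m.+1 + k)%nat (iota m.+2 k, [::]) ([:: 0%nat], [::]) (iota 1 m.+1, [::]).
  rewrite /CMI in c.
  have s1 : H law (m + k) (vjoin (iota m.+1 k, [::]) (iota 0 m.+1, [::])) = H law (m.+1 + k) (vjoin (iota m.+2 k, [::]) (iota 1 m.+1, [::])).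
  { rewrite (Hsh 1%nat (m + k)%nat); [|bnd]. have -> : (m + k + 1 = m.+1 + k)%nat by lia. apply: Hm; memtac. }
  have s2 : H law (m + k) (iota 0 m.+1, [::]) = H law (m.+1 + k) (iota 1 m.+1, [::]).
  { rewrite (Hsh 1%nat (m + k)%nat); [|bnd]. have -> : (m + k + 1 = m.+1 + k)%nat by lia. apply: Hm; memtac. }
  have s3 : H law (m.+1 + k) (vjoin ([:: 0%nat], [::]) (iota 1 m.+1, [::])) = H law (m.+1+k) (iota 0 m.+2, [::]).
  { apply: Hm; memtac. }
  have s4 : H law (m.+1 + k) (vjoin (vjoin (iota m.+2 k, [::]) ([:: 0%nat], [::])) (iota 1 m.+1, [::])) = H law (m.+1 + k) (vjoin (iota m.+2 k, [::]) (iota 0 m.+2, [::])).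
  { apply: Hm; memtac. }
  lra. }
have hge : forall m, 0 <= h m.
{ move=> m; have := Hmono (m+k)%nat (iota m.+1 k, [::]) (iota 0 m.+1, [::]); rewrite /h; cbv beta; lra. }

have hlb : has_lb h.
{ exists 0; move=> x [n ->]; rewrite /opp_seq; have := hge n; lra. }
have [hl hcv] := decreasing_cv h hdec hlb.
pose a := fun j => CMI law (j + k) ([::], [:: (j + k)%nat]) (iota 0 j.+1, [::]) (iota j.+1 k, [::]).
have amono : forall j, a j <= a j.+1.
{ move=> j; rewrite /a; cbv beta.
  rewrite (Csh 1%nat (j + k)%nat); [|bnd|bnd|bnd].
  have -> : (j + k + 1 = j.+1 + k)%nat by lia.
  rewrite (Cmem (j.+1 + k)%nat _ _ _ ([::], [:: (j.+1 + k)%nat]) (iota 1 j.+1, [::]) (iota j.+2 k, [::])); [|memtac..].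
  apply: Cmr; sub. }
have aub : forall j, a j <= H law k (vjoin ([::], [:: k]) (iota 1 k, [::])) - H law k (iota 1 k, [::]).
{ move=> j; have := Cle (j + k)%nat ([::], [:: (j + k)%nat]) (iota 0 j.+1, [::]) (iota j.+1 k, [::]).
  have e1 : H law k (vjoin ([::], [:: k]) (iota 1 k, [::])) = H law (j + k)%nat (vjoin ([::], [:: (j + k)%nat]) (iota j.+1 k, [::])).
  { rewrite (Hsh j k); [|bnd]. have -> : (k + j = j + k)%nat by lia. apply: Hm; memtac. }
  have e2 : H law k (iota 1 k, [::]) = H law (j + k)%nat (iota j.+1 k, [::]).
  { rewrite (Hsh j k); [|bnd]. have -> : (k + j = j + k)%nat by lia. apply: Hm; memtac. }
  rewrite /a; cbv beta; lra. }
have aub' : has_ub a.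
{ exists (H law k (vjoin ([::], [:: k]) (iota 1 k, [::])) - H law k (iota 1 k, [::])).
  move=> x [n ->]; exact: aub. }
have [al acv] := growing_cv a amono aub'.
pose jj := fun m => CMI law (m + k) (iota 0 m.+1, [::]) ([::], [:: m]) (iota m.+1 k, [:: (m + k)%nat]).
have Fj : forall m n, J_approx law k m n = jj m.
{ move=> m n; rewrite /J_approx /jj; cbv beta.
  rewrite (Cmem (m + n + k)%nat _ _ _ (iota 0 m.+1, [::]) ([::], [:: m]) (vjoin (iota m.+1 k, [:: (m + k)%nat]) (iota (m + k).+1 n, [::]))); [|memtac..].
  rewrite (Cdf _ (m + k)%nat); [|side..].
  rewrite (Cex (m + k)%nat (m + n + k)%nat); [done|bnd|bnd|bnd|lia]. }
have Frel : forall m, (k <= m)%nat -> jj m = zeta_approx law k m - C + a (m - k)%nat - a m.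
{ move=> m hkm.
  have Fz' : zeta_approx law k m = (H law (m + k)%nat (iota m.+1 k ++ iota 0 m.+1, [::])) + (H law (m + k)%nat (iota 0 m.+1, [:: m])) - (H law (m + k)%nat (iota m.+1 k ++ iota 0 m.+1, [:: m])) - (H law (m + k)%nat (iota 0 m.+1, [::])).
  { rewrite /zeta_approx /CMI; congr (_ + _ - _ - _); apply: Hm; memtac. }
  have Fj' : jj m = (H law (m + k)%nat (iota m.+1 k ++ iota 0 m.+1, [:: (m + k)%nat])) + (H law (m + k)%nat (iota m.+1 k, [:: m; (m + k)%nat])) - (H law (m + k)%nat (iota m.+1 k ++ iota 0 m.+1, [:: m; (m + k)%nat])) - (H law (m + k)%nat (iota m.+1 k, [:: (m + k)%nat])).
  { rewrite /jj /CMI; cbv beta; congr (_ + _ - _ - _); apply: Hm; memtac. }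
  have Fa : a m = (H law (m + k)%nat (iota m.+1 k, [:: (m + k)%nat])) + (H law (m + k)%nat (iota m.+1 k ++ iota 0 m.+1, [::])) - (H law (m + k)%nat (iota m.+1 k ++ iota 0 m.+1, [:: (m + k)%nat])) - (H law (m + k)%nat (iota m.+1 k, [::])).
  { rewrite /a /CMI; cbv beta; congr (_ + _ - _ - _); apply: Hm; memtac. }
  have Fa' : a (m - k)%nat = (H law (m + k)%nat (iota m.+1 k, [:: (m + k)%nat])) + (H law (m + k)%nat (iota k (m - k).+1 ++ iota m.+1 k, [::])) - (H law (m + k)%nat (iota k (m - k).+1 ++ iota m.+1 k, [:: (m + k)%nat])) - (H law (m + k)%nat (iota m.+1 k, [::])).
  { rewrite /a; cbv beta. rewrite (Csh k (m - k + k)%nat); [|bnd|bnd|bnd].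
    have -> : (m - k + k + k = m + k)%nat by lia.
    rewrite /CMI; congr (_ + _ - _ - _); apply: Hm; memtac. }
  have FC : C = ((H law (m + k)%nat ([::], [:: m])) + (H law (m + k)%nat (iota m.+1 k, [::])) - (H law (m + k)%nat (iota m.+1 k, [:: m]))) - ((H law (m + k)%nat ([::], [:: (m + k)%nat])) + (H law (m + k)%nat (iota m.+1 k, [::])) - (H law (m + k)%nat (iota m.+1 k, [:: (m + k)%nat]))).
  { rewrite /C /X1k (Msh m k ([::], [:: 0%nat]) (iota 1 k, [::])); [|bnd|bnd].
    rewrite (Msh m k ([::], [:: k]) (iota 1 k, [::])); [|bnd|bnd].
    have -> : (k + m = m + k)%nat by lia.
    rewrite /MI; congr ((_ + _ - _) - (_ + _ - _)); apply: Hm; memtac. }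
  have Fs1 : MI law (m + k) ([::], [:: m]) (iota 0 m.+1, [::]) = MI law (m + k) ([::], [:: (m + k)%nat]) (iota k (m - k).+1 ++ iota m.+1 k, [::]).
  { rewrite -(Mex m (m + k)%nat); [|bnd|bnd|lia]. rewrite (Msh k m); [|bnd|bnd]. rewrite /MI; congr (_ + _ - _); apply: Hm; memtac. }
  have Fs : (H law (m + k)%nat ([::], [:: m])) + (H law (m + k)%nat (iota 0 m.+1, [::])) - (H law (m + k)%nat (iota 0 m.+1, [:: m])) = (H law (m + k)%nat ([::], [:: (m + k)%nat])) + (H law (m + k)%nat (iota k (m - k).+1 ++ iota m.+1 k, [::])) - (H law (m + k)%nat (iota k (m - k).+1 ++ iota m.+1 k, [:: (m + k)%nat])).
  { transitivity (MI law (m + k) ([::], [:: m]) (iota 0 m.+1, [::])).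
    { rewrite /MI; congr (_ + _ - _); apply: Hm; memtac. }
    rewrite Fs1 /MI; congr (_ + _ - _); apply: Hm; memtac. }
  have Fg1 : (H law (m + k)%nat (iota m.+1 k ++ iota 0 m.+1, [:: m; (m + k)%nat])) = (H law (m + k)%nat (iota 0 m.+1, [:: m])) + (H law (m + k)%nat (iota m.+1 k, [:: m; (m + k)%nat])) - (H law (m + k)%nat ([::], [:: m])).
  { transitivity (H law (m + k)%nat (vjoin (vjoin (iota 0 m.+1, [::]) (iota m.+1 k, [:: (m + k)%nat])) ([::], [:: m]))); first by apply: Hm; memtac.
    rewrite Gi; [|side..]. congr (_ + _ - _); apply: Hm; memtac. }
  have Fg2 : (H law (m + k)%nat (iota m.+1 k ++ iota 0 m.+1, [:: m])) = (H law (m + k)%nat (iota 0 m.+1, [:: m])) + (H law (m + k)%nat (iota m.+1 k, [:: m])) - (H law (m + k)%nat ([::], [:: m])).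
  { transitivity (H law (m + k)%nat (vjoin (vjoin (iota 0 m.+1, [::]) (iota m.+1 k, [::])) ([::], [:: m]))); first by apply: Hm; memtac.
    rewrite Gi; [|side..]. congr (_ + _ - _); apply: Hm; memtac. }
  rewrite Fj' Fz' Fa Fa' FC; lra. }
have zcv : Un_cv (fun m => zeta_approx law k m) (hl - c1).
{ apply: (cv_ev (fun m => h m - c1) _ _ 0%nat); first by move=> n _; rewrite Fz.
  exact: CV_minus hcv (cv_const c1). }
have jcv : Un_cv jj (hl - c1 - C + al - al).
{ apply: (cv_ev (fun m => zeta_approx law k m - C + a (m - k)%nat - a m) _ _ k); first by move=> n hn; rewrite Frel.
  apply: CV_minus; last exact: acv.
  apply: CV_plus; last exact: (cv_subk a al k acv).
  apply: CV_minus; [exact: zcv | exact: cv_const]. }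
exists (hl - c1), (hl - c1 - C + al - al).
split; first exact: zcv.
split; first exact: (cv_dlim jj _ _ jcv Fj).
lra.
Qed.
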